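(* Let $d$ be an even positive integer and $s$ a positive integer with $2s\leqslant d$. For every $\varepsilon,\gamma\in I^s\setminus\{\alpha,\omega\}$, $$ \mathrm{diam}(B_\varepsilon,B_\gamma)\leqslant\min\{d-s-\langle\varepsilon,\gamma\rangle,\ d-s-\langle\bar\varepsilon,\bar\gamma\rangle\}. $$
   Context: Let $I=\{0,1\}$; for binary vectors $|x|=\sum_i x_i$, $\langle x,y\rangle=\sum_i x_iy_i$, and $\bar x=(1-x_1,\ldots,1-x_n)$. For $x,y\in I^n$, $\mathrm{dist}(x,y)$ is the Hamming distance, and for $A,B\subseteq I^n$, $\mathrm{diam}(A,B)=\max\{\mathrm{dist}(a,b)\colon a\in A,b\in B\}$. Let $\alpha=(0,\ldots,0)$, $\omega=(1,\ldots,1)\in I^s$. For $\varepsilon\in I^s\setminus\{\alpha,\omega\}$ let $i=t(\varepsilon)$ be the unique index with $\varepsilon_i\neq\varepsilon_{i+1}=\cdots=\varepsilon_s$, and $A_\varepsilon=\{\varepsilon_1\}\times\cdots\times\{\varepsilon_i\}\times I^{s-1-i}\subseteq I^{s-1}$. Define subsets of $I^{d-s}$: $X_0=\{x\colon |x|\leqslant \frac d2-s\}$; $X_k=\{x\colon |x|=\frac d2-s+k\}$ for $0<k<s$; $X_s=\{x\colon |x|\geqslant \frac d2\}$. For $\varepsilon\in I^s\setminus\{\alpha,\omega\}$ set $B_\varepsilon=X_{|\varepsilon|}\cap(I^{d-2s+1}\times A_\varepsilon)$, where $I^{d-s}=I^{d-2s+1}\times I^{s-1}$. *)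

(* Defs.v *)
(* Binary vectors in I^n are n.-tuple bool (positions 0..n-1,
   i.e. paper index i corresponds to position i-1). *)
From mathcomp Require Import all_boot.
Set Implicit Arguments. Unset Strict Implicit. Unset Printing Implicit Defensive.

Definition weight n (x : n.-tuple bool) : nat := \sum_(i < n) nat_of_bool (tnth x i).
Definition inner n (x y : n.-tuple bool) : nat :=
  \sum_(i < n) nat_of_bool (tnth x i && tnth y i).
Definition compl n (x : n.-tuple bool) : n.-tuple bool := map_tuple negb x.
Definition dist n (x y : n.-tuple bool) : nat :=
  \sum_(i < n) nat_of_bool (tnth x i != tnth y i).
Definition diam n (A B : {set n.-tuple bool}) : nat :=
  \max_(a in A) \max_(b in B) dist a b.

Definition alpha s : s.-tuple bool := [tuple false | _ < s].
Definition omega s : s.-tuple bool := [tuple true | _ < s].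

(* t(eps): the (1-based) index i with eps_i <> eps_{i+1} = ... = eps_s,
   i.e. the largest 1-based position whose entry differs from eps_s. *)
Definition tidx s (e : s.-tuple bool) : nat :=
  \max_(j < s | tnth e j != nth false e s.-1) j.+1.

(* A_eps = {eps_1} x ... x {eps_i} x I^{s-1-i}, subset of I^{s-1} *)
Definition Aset s (e : s.-tuple bool) : {set (s.-1).-tuple bool} :=
  [set y : (s.-1).-tuple bool |
     [forall j : 'I_(s.-1), (j < tidx e) ==> (tnth y j == nth false e j)]].

Definition Xset d s k : {set (d - s).-tuple bool} :=
  [set x : (d - s).-tuple bool |
     if k == 0 then weight x <= d %/ 2 - s
     else if k < s then weight x == d %/ 2 - s + k
     else d %/ 2 <= weight x].

(* B_eps = X_{|eps|} cap (I^{d-2s+1} x A_eps), with I^{d-s} = I^{d-2s+1} x I^{s-1} *)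
Definition Bset d s (e : s.-tuple bool) : {set (d - s).-tuple bool} :=
  [set x in Xset d s (weight e) |
     [exists a in Aset e, drop (d - 2 * s + 1) x == val a]].
Arguments Bset d s e : clear implicits.
Arguments Xset d s k : clear implicits.

(* Main.v *)
Require Import Defs.
From mathcomp Require Import all_boot.
From mathcomp Require Import zify.
Set Implicit Arguments. Unset Strict Implicit.

Definition O m i n (F : nat -> nat) := \sum_(0<=t<m) F t + \sum_(m+i<=t<n) F t.

Lemma O_mono m i n F H : (forall t, F t <= H t) -> O m i n F <= O m i n H.
Proof. by move=> FH; rewrite /O leq_add //; apply: leq_sum => t _. Qed.

Lemma O_add m i n F H : O m i n (fun t => F t + H t) = O m i n F + O m i n H.
Proof. rewrite /O !big_split /=; lia. Qed.

Lemma O_const m i n c : m + i <= n -> O m i n (fun _ => c) = (n - i) * c.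
Proof. move=> H; rewrite /O !sum_nat_const_nat; nia. Qed.

Lemma split_n m i n F : m + i <= n ->
  \sum_(0<=t<n) F t = O m i n F + \sum_(0<=q<i) F (m+q).
Proof.
move=> H; rewrite /O (big_cat_nat _ (n:=m)) //=; last lia.
rewrite (big_cat_nat _ (n:=m+i) (m:=m)) //=; last lia.
rewrite -{2}(add0n m) big_addn addKn.
rewrite [X in _ = _ + X](eq_big_nat _ _ (F2 := fun q => F (q + m))); last by move=> q _; rewrite addnC.
lia.
Qed.

Lemma split_s i s F : i <= s ->
  \sum_(0<=q<s) F q = \sum_(0<=q<i) F q + \sum_(i<=q<s) F q.
Proof. by move=> H; rewrite (big_cat_nat _ (n:=i)). Qed.

Lemma one_le s F q0 : q0 < s -> F q0 <= \sum_(0<=q<s) F q.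
Proof.
move=> H; rewrite big_mkord (bigD1 (Ordinal H)) //=; exact: leq_addr.
Qed.

Lemma sumP_le i (F H : nat -> nat) K : (forall q, q < i -> F q + H q <= K) ->
  \sum_(0<=q<i) F q + \sum_(0<=q<i) H q <= i * K.
Proof.
move=> FH; rewrite -big_split /=.
apply: leq_trans (_ : \sum_(0<=q<i) K <= _); last by rewrite sum_nat_const_nat subn0.
rewrite big_mkord [X in _ <= X]big_mkord; apply: leq_sum => q _; exact: FH.
Qed.

Lemma core (n m s i h : nat) (X Y E G : nat -> bool) (c : bool) :
  m + i <= n -> i <= s -> n + s = 2*h -> s <= h ->
  (forall q, q < i -> X (m+q) = E q /\ Y (m+q) = G q) ->
  (forall q, i <= q < s -> E q = c) ->
  (c -> h - s + \sum_(0<=q<s) E q <= \sum_(0<=t<n) X t /\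
        h - s + \sum_(0<=q<s) G q <= \sum_(0<=t<n) Y t) ->
  (~~ c -> \sum_(0<=t<n) X t <= h - s + \sum_(0<=q<s) E q /\
        \sum_(0<=t<n) Y t <= h - s + \sum_(0<=q<s) G q) ->
  \sum_(0<=t<n) (X t != Y t) + \sum_(0<=q<s) (E q && G q) <= n /\
  \sum_(0<=t<n) (X t != Y t) + \sum_(0<=q<s) (~~ E q && ~~ G q) <= n.
Proof.
move=> Hmi His Hns Hsh HP HR Hc1 Hc0.
rewrite !(split_n _ (m:=m) (i:=i) Hmi) !(split_s _ His).
have eqP1 : \sum_(0<=q<i) (X (m+q) != Y (m+q)) = \sum_(0<=q<i) (E q != G q).
  apply: eq_big_nat => q /andP [_ Hq]; by case: (HP q Hq) => [-> ->].
have eqPX : \sum_(0<=q<i) X (m+q) = \sum_(0<=q<i) E q.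
  apply: eq_big_nat => q /andP [_ Hq]; by case: (HP q Hq) => [-> _].
have eqPY : \sum_(0<=q<i) Y (m+q) = \sum_(0<=q<i) G q.
  apply: eq_big_nat => q /andP [_ Hq]; by case: (HP q Hq) => [_ ->].
rewrite eqP1; rewrite !(split_n _ (m:=m) (i:=i) Hmi) !(split_s _ His) eqPX eqPY in Hc1 Hc0.
have B1 := sumP_le (F := fun q => nat_of_bool (E q != G q)) (H := fun q => nat_of_bool (E q && G q)) (K := 1) (i := i).
have B2 := sumP_le (F := fun q => nat_of_bool (E q != G q)) (H := fun q => nat_of_bool (~~ E q && ~~ G q)) (K := 1) (i := i).
have /= {}B1 : _ := B1 (fun q _ => ltac:(simpl; by case: (E q); case: (G q))).
have /= {}B2 : _ := B2 (fun q _ => ltac:(simpl; by case: (E q); case: (G q))).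
have O1 := O_mono m i n (F := fun t => nat_of_bool (X t != Y t)) (H := fun _ => 1) (fun t => ltac:(simpl; by case: (X t); case: (Y t))).
have O2 := O_mono m i n (F := fun t => nat_of_bool (X t != Y t)) (H := fun t => X t + Y t) (fun t => ltac:(simpl; by case: (X t); case: (Y t))).
have O3 := O_mono m i n (F := fun t => nat_of_bool (X t != Y t) + X t + Y t) (H := fun _ => 2) (fun t => ltac:(simpl; by case: (X t); case: (Y t))).
rewrite !O_add !O_const // in O1 O2 O3.
have GG : \sum_(i<=q<s) G q + \sum_(i<=q<s) (~~ G q) = s - i.
  by rewrite -big_split /= -[s - i]muln1 -sum_nat_const_nat; apply: eq_big_nat => q _; case: (G q).
move: Hc1 Hc0; case: c HR => HR Hc1 Hc0.
- have [W1 W2] := Hc1 isT.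
  have R1 : \sum_(i<=q<s) E q = s - i.
    by rewrite -[s - i]muln1 -sum_nat_const_nat; apply: eq_big_nat => q Hq; rewrite HR.
  have R2 : \sum_(i<=q<s) (E q && G q) = \sum_(i<=q<s) G q.
    by apply: eq_big_nat => q Hq; rewrite HR.
  have R3 : \sum_(i<=q<s) (~~ E q && ~~ G q) = 0.
    by rewrite (eq_big_nat _ _ (F2 := fun _ => 0)) ?sum_nat_const_nat ?muln0 // => q Hq; rewrite HR.
  rewrite R2 R3; rewrite R1 in W1. lia.
- have [W1 W2] := Hc0 isT.
  have R1 : \sum_(i<=q<s) E q = 0.
    by rewrite (eq_big_nat _ _ (F2 := fun _ => 0)) ?sum_nat_const_nat ?muln0 // => q Hq; rewrite HR.
  have R2 : \sum_(i<=q<s) (E q && G q) = 0.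
    by rewrite (eq_big_nat _ _ (F2 := fun _ => 0)) ?sum_nat_const_nat ?muln0 // => q Hq; rewrite HR.
  have R3 : \sum_(i<=q<s) (~~ E q && ~~ G q) = \sum_(i<=q<s) (~~ G q).
    by apply: eq_big_nat => q Hq; rewrite HR.
  rewrite R2 R3; rewrite R1 in W1. lia.
Qed.

Lemma sum_ord n (f : 'I_n -> nat) (F : nat -> nat) :
  (forall i : 'I_n, f i = F i) -> \sum_(i<n) f i = \sum_(0<=t<n) F t.
Proof. by move=> H; rewrite big_mkord; apply: eq_bigr => i _. Qed.

Lemma weightE n (x : n.-tuple bool) : weight x = \sum_(0<=t<n) nth false x t.
Proof. by apply: sum_ord => i; rewrite (tnth_nth false). Qed.

Lemma distE n (x y : n.-tuple bool) :
  dist x y = \sum_(0<=t<n) (nth false x t != nth false y t).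
Proof. by apply: sum_ord => i; rewrite !(tnth_nth false). Qed.

Lemma innerE n (x y : n.-tuple bool) :
  inner x y = \sum_(0<=t<n) (nth false x t && nth false y t).
Proof. by apply: sum_ord => i; rewrite !(tnth_nth false). Qed.

Lemma innerCE n (x y : n.-tuple bool) :
  inner (compl x) (compl y) = \sum_(0<=t<n) (~~ nth false x t && ~~ nth false y t).
Proof. by apply: sum_ord => i; rewrite /compl !tnth_map !(tnth_nth false). Qed.

Lemma dist_sym n (x y : n.-tuple bool) : dist x y = dist y x.
Proof. by rewrite /dist; apply: eq_bigr => i _; rewrite eq_sym. Qed.

Lemma inner_sym n (x y : n.-tuple bool) : inner x y = inner y x.
Proof. by rewrite /inner; apply: eq_bigr => i _; rewrite andbC. Qed.

Lemma wt_pos s (g : s.-tuple bool) : g != alpha s -> 0 < weight g.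
Proof.
rewrite lt0n; apply: contra => /eqP H; apply/eqP/eq_from_tnth => j.
rewrite tnth_mktuple; move: H; rewrite /weight (bigD1 j) //=.
by case: (tnth g j).
Qed.

Lemma wt_lt s (g : s.-tuple bool) : g != omega s -> weight g < s.
Proof.
move=> H.
have [j Hj] : exists j, tnth g j = false.
  case: (boolP [exists j, ~~ tnth g j]) => [/existsP [j /negbTE Hj]|]; first by exists j.
  rewrite negb_exists => /forallP Hall; case/negP: H; apply/eqP/eq_from_tnth => j.
  by rewrite tnth_mktuple; move: (Hall j); rewrite negbK.
have S : \sum_(i<s) tnth g i + \sum_(i<s) ~~ tnth g i = s.
  rewrite -big_split /= (eq_bigr (fun _ => 1)); last by move=> i _; case: (tnth g i).
  by rewrite sum_nat_const card_ord muln1.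
have : 1 <= \sum_(i<s) ~~ tnth g i by rewrite (bigD1 j) //= Hj.
rewrite /weight; lia.
Qed.

Lemma tidx_le s (e : s.-tuple bool) : tidx e <= s.-1.
Proof.
apply/bigmax_leqP => j Hj.
have : (j : nat) != s.-1.
  apply: contra Hj => /eqP Ej; rewrite (tnth_nth false) Ej //.
have := ltn_ord j; lia.
Qed.

Lemma tidx_rest s (e : s.-tuple bool) q :
  tidx e <= q < s -> nth false e q = nth false e s.-1.
Proof.
case/andP => H1 H2; apply/eqP; apply: contraLR H1 => Hn; rewrite -ltnNge.
have := @leq_bigmax_cond _ (fun j : 'I_s => tnth e j != nth false e s.-1)
   (fun j : 'I_s => j.+1) (Ordinal H2).
by rewrite /= (tnth_nth false) /= => /(_ Hn).
Qed.

Lemma B_tail d s (e : s.-tuple bool) (x : (d - s).-tuple bool) :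
  x \in Bset d s e -> forall q, q < tidx e ->
  nth false x (d - 2 * s + 1 + q) = nth false e q.
Proof.
rewrite inE => /andP [_ /existsP [a /andP [Ha /eqP Hx]]] q Hq.
have Hq' : q < s.-1 by apply: leq_trans Hq (tidx_le e).
rewrite -nth_drop Hx; move: Ha; rewrite inE => /forallP /(_ (Ordinal Hq')) /=.
by rewrite Hq /= => /eqP <-; rewrite (tnth_nth false).
Qed.

Lemma B_X d s (e : s.-tuple bool) (x : (d - s).-tuple bool) :
  x \in Bset d s e -> x \in Xset d s (weight e).
Proof. by rewrite inE => /andP []. Qed.

Lemma wt_le s (e : s.-tuple bool) : weight e <= s.
Proof.
rewrite /weight; apply: leq_trans (_ : \sum_(i<s) 1 <= _).
  by apply: leq_sum => i _; case: (tnth e i).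
by rewrite sum_nat_const card_ord muln1.
Qed.

Lemma X_lo d s k (x : (d - s).-tuple bool) : x \in Xset d s k ->
  0 < k -> k <= s -> s <= d %/ 2 -> d %/ 2 - s + k <= weight x.
Proof.
rewrite inE => H Hk Hks Hsd; move: H; rewrite (negbTE (lt0n_neq0 Hk)).
case: ltnP => _ H; first by rewrite (eqP H).
apply: leq_trans H; lia.
Qed.

Lemma X_hi d s k (x : (d - s).-tuple bool) : x \in Xset d s k ->
  k < s -> weight x <= d %/ 2 - s + k.
Proof.
rewrite inE => H Hks; move: H; case: eqP => [-> H|_]; first by rewrite addn0.
by rewrite Hks => /eqP ->.
Qed.

Lemma pointwise d s (e g : s.-tuple bool) x y :
  ~~ odd d -> 0 < s -> 2 * s <= d ->
  g != alpha s -> g != omega s -> tidx e <= tidx g ->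
  x \in Bset d s e -> y \in Bset d s g ->
  dist x y + inner e g <= d - s /\ dist x y + inner (compl e) (compl g) <= d - s.
Proof.
move=> Hod Hs Hsd Hga Hgo Hij Hx Hy.
have Hd : 2 %| d by rewrite dvdn2.
have Hti := tidx_le e.
set c := nth false e s.-1.
rewrite distE innerE innerCE.
apply: (@core (d - s) (d - 2 * s + 1) s (tidx e) (d %/ 2)
  (nth false x) (nth false y) (nth false e) (nth false g) c
  ltac:(lia) ltac:(lia) ltac:(lia) ltac:(lia)
  (fun q Hq => conj (B_tail Hx Hq) (B_tail Hy (leq_trans Hq Hij)))
  (fun q Hq => tidx_rest Hq)).
- move=> Hc; rewrite -!weightE; split.
  + apply: X_lo (B_X Hx) _ (wt_le e) _; last lia.
    rewrite weightE; apply: leq_trans (one_le (nth false e) (_ : s.-1 < s)); last lia.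
    by rewrite -/c Hc.
  + apply: X_lo (B_X Hy) (wt_pos Hga) (wt_le g) _; lia.
- move=> Hc; rewrite -!weightE; split.
  + apply: X_hi (B_X Hx) _.
    have S : \sum_(0<=q<s) nth false e q + \sum_(0<=q<s) ~~ nth false e q = s.
      rewrite -big_split /= (eq_big_nat _ _ (F2 := fun _ => 1)); last by move=> i _; case: (nth false e i).
      by rewrite sum_nat_const_nat subn0 muln1.
    have : 1 <= \sum_(0<=q<s) ~~ nth false e q.
      apply: leq_trans (one_le (fun q => nat_of_bool (~~ nth false e q)) (_ : s.-1 < s)); last lia.
      by rewrite /= -/c (negbTE Hc).
    rewrite weightE; lia.
  + exact: X_hi (B_X Hy) (wt_lt Hgo).
Qed.

Theorem lemma4 (d s : nat) (e g : s.-tuple bool) :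
  0 < d -> ~~ odd d -> 0 < s -> 2 * s <= d ->
  e != alpha s -> e != omega s -> g != alpha s -> g != omega s ->
  diam (Bset d s e) (Bset d s g)
    <= minn (d - s - inner e g) (d - s - inner (compl e) (compl g)).
Proof.
move=> Hd Hod Hs Hsd Hea Heo Hga Hgo.
apply/bigmax_leqP => x Hx; apply/bigmax_leqP => y Hy.
have [P1 P2] : dist x y + inner e g <= d - s /\
               dist x y + inner (compl e) (compl g) <= d - s.
  case: (leqP (tidx e) (tidx g)) => Hij.
    exact: pointwise Hod Hs Hsd Hga Hgo Hij Hx Hy.
  have [Q1 Q2] := pointwise Hod Hs Hsd Hea Heo (ltnW Hij) Hy Hx.
  by rewrite dist_sym inner_sym [inner (compl e) _]inner_sym.
rewrite leq_min; apply/andP; split; lia.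
Qed.
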